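(* Let $v:2^N\to\mathbb{R}_+$ be a gross substitutes valuation over a finite set $N$. Let $A,B\subseteq N$ be disjoint and $j\in N\setminus(A\cup B)$. Assume that $v(\{i\}\mid A\cup\{j\})=0$ for all $i\in B$ and that $0\le v(\{j\}\mid A)-x<v(B\mid A)$ for some $x\ge0$. Then there is $i\in B$ such that $v(\{j\}\mid A)-x<v(\{i\}\mid A)$.
   Context: Valuations are monotone functions $v:2^N\to\mathbb{R}_+$ with $v(\emptyset)=0$, $N=[n]$. Marginal value: $v(T\mid S)=v(S\cup T)-v(S)$. For a price vector $p\in\mathbb{R}^n_+$, $p(S)=\sum_{j\in S}p_j$ and $D(v;p)=\arg\max_{S\subseteq N}(v(S)-p(S))$. The valuation $v$ is gross substitutes if for every price vector $p$, every $S\in D(v;p)$ and every price vector $p'\ge p$ (coordinatewise), there is $T\in D(v;p')$ with $S\cap\{j: p_j=p'_j\}\subseteq T$. *)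

(* Defs.v *)
From HB Require Import structures.
From mathcomp Require Import all_boot all_order all_algebra.
From mathcomp Require Import reals.
Set Implicit Arguments. Unset Strict Implicit. Unset Printing Implicit Defensive.
Import Order.TTheory GRing.Theory Num.Theory.
Local Open Scope ring_scope.

(* Ground set N = [n] is the finite type 'I_n; valuations are maps {set 'I_n} -> R. *)
Section GS.
Variables (R : realType) (n : nat).

Definition valuation (v : {set 'I_n} -> R) : Prop :=
  [/\ v set0 = 0,
      (forall S : {set 'I_n}, 0 <= v S) &
      (forall S T : {set 'I_n}, S \subset T -> v S <= v T)].

Definition marg (v : {set 'I_n} -> R) (T S : {set 'I_n}) : R := v (S :|: T) - v S.

Definition price (p : 'I_n -> R) (S : {set 'I_n}) : R := \sum_(j in S) p j.

Definition in_demand (v : {set 'I_n} -> R) (p : 'I_n -> R) (S : {set 'I_n}) : Prop :=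
  forall T : {set 'I_n}, v T - price p T <= v S - price p S.

Definition gross_substitutes (v : {set 'I_n} -> R) : Prop :=
  valuation v /\
  forall (p p' : 'I_n -> R),
    (forall j, 0 <= p j) -> (forall j, 0 <= p' j) ->
    (forall j, p j <= p' j) ->
    forall S : {set 'I_n}, in_demand v p S ->
      exists T : {set 'I_n}, in_demand v p' T /\ [set j in S | p j == p' j] \subset T.

End GS.

(* Main.v *)
Require Import Defs.
From HB Require Import structures.
From mathcomp Require Import all_boot all_order all_algebra.
From mathcomp Require Import reals.
From mathcomp.algebra_tactics Require Import lra.
Import Order.TTheory GRing.Theory Num.Theory.
Local Open Scope ring_scope.

Section H.
Variables (R : realType) (n : nat).
Implicit Types (v : {set 'I_n} -> R) (p : 'I_n -> R).

Lemma price_sub p (U T : {set 'I_n}) : (forall k, 0 <= p k) -> U \subset T ->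
  price p U <= price p T.
Proof.
move=> p0 sUT; rewrite /price [X in _ <= X](big_setID U) /= (setIidPr sUT).
by rewrite lerDl sumr_ge0.
Qed.

Lemma price1 p k : price p [set k] = p k.
Proof. by rewrite /price big_set1. Qed.

Lemma price2 p k l : k != l -> price p [set k; l] = p k + p l.
Proof.
by move=> kl; rewrite /price big_setU1 ?big_set1 // in_set1.
Qed.

Lemma demand_exists v p : exists S, in_demand v p S.
Proof.
case: (@arg_maxP _ _ {set 'I_n} set0 predT (fun S => v S - price p S) isT).
by move=> S _ H; exists S => T; apply: H.
Qed.

Lemma demand_avoid v p T k : valuation v -> (forall k, 0 <= p k) ->
  v setT < p k -> in_demand v p T -> k \notin T.
Proof.
case=> v0 vge vmon p0 Mk dT; apply/negP => kT.
have := dT (T :\ k); rewrite /price (big_setD1 k kT) /= -/(price p (T :\ k)).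
have : v T <= v setT by apply: vmon; apply: subsetT.
have := vge (T :\ k).
move=> h1 h2 h3.
have : v T - (p k + price p (T :\ k)) < v (T :\ k) - price p (T :\ k).
  rewrite opprD addrA ltrD2r; apply: (lt_le_trans _ h1).
  by rewrite subr_lt0; apply: le_lt_trans Mk.
by rewrite ltNge h3.
Qed.
End H.
Arguments price_sub {R n}.
Arguments price1 {R n}.
Arguments price2 {R n}.
Arguments demand_exists {R n}.
Arguments demand_avoid {R n v p T k}.

Theorem mainTheorem8 (R : realType) (n : nat) (v : {set 'I_n} -> R)
  (A B : {set 'I_n}) (j : 'I_n) (x : R) :
  gross_substitutes v ->
  [disjoint A & B] ->
  j \notin A :|: B ->
  (forall i, i \in B -> marg v [set i] (A :|: [set j]) = 0) ->
  0 <= x ->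
  0 <= marg v [set j] A - x ->
  marg v [set j] A - x < marg v B A ->
  exists2 i, i \in B & marg v [set j] A - x < marg v [set i] A.
Proof.
move=> [vval gs] dAB jAB Hm x0 y0 ylt.
have [v0 vge vmon] := vval.
rewrite /marg in Hm y0 ylt *.
move: jAB; rewrite in_setU negb_or => /andP[jA jB].
set vAj := v (A :|: [set j]) in Hm y0 ylt *.
set d := v (A :|: B) - v A - (vAj - v A - x).
have d0 : 0 < d by rewrite /d subr_gt0.
set k := #|B|%:R : R.
have k0 : 0 <= k by rewrite /k ler0n.
set c := d / (k + 1).
have k1 : k + 1 != 0 by rewrite lt0r_neq0 // ltr_wpDl.
have c0 : 0 < c by rewrite /c divr_gt0 // ltr_wpDl.
have cB : c * k < d.
  have : c * (k + 1) = d by rewrite /c divfK.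
  lra.
set M := v setT + 1.
have M0 : 0 < M by rewrite /M ltr_wpDl.
have vM : forall S, v S < M.
  move=> S; rewrite /M; apply: le_lt_trans (vmon _ _ (subsetT S)) _; lra.
pose p kk := if kk \in A then 0 else if kk == j then x else if kk \in B then c else M.
have p0 : forall kk, 0 <= p kk.
  move=> kk; rewrite /p; case: ifP => // _; case: ifP => // _; case: ifP => _; lra.
have pB : forall kk, kk \in B -> p kk = c.
  move=> kk kB; rewrite /p (disjointFl dAB kB) kB; case: eqP => // ekj.
  by move: jB; rewrite -ekj kB.
have pj : p j = x by rewrite /p (negbTE jA) eqxx.
have [S dS] := demand_exists v p.
have uAB : price p (A :|: B) = c * k.
  rewrite /price (eq_bigl [predU A & B]); last by move=> q; rewrite !inE.
  rewrite bigU //= big1 ?add0r; last by move=> q qA; rewrite /p qA.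
  rewrite (eq_bigr (fun _ => c)); last by move=> q qB; rewrite pB.
  by rewrite sumr_const mulr_natr.
have uA1 : v A <= vAj - x by lra.
have vAB : v (A :|: B) - price p (A :|: B) > vAj - x by rewrite uAB; rewrite /d in cB; lra.
have [/eqP SB0|/set0Pn [i]] := boolP (S :&: B == set0).
  exfalso.
  have sS : S \subset A :|: [set j].
    apply/subsetP => kk kS; rewrite !inE.
    case kA: (kk \in A) => //=; apply/negPn/negP => kj.
    have kB : kk \notin B.
      by apply/negP => kB; move: SB0 => /setP/(_ kk); rewrite !inE kS kB.
    suff : kk \notin S by rewrite kS.
    apply: (demand_avoid vval p0 _ dS); rewrite /p kA (negbTE kj) (negbTE kB).
    exact: vM.
  have := dS (A :|: B).
  case jS: (j \in S).
    have : price p [set j] <= price p S by apply: price_sub => //; rewrite sub1set.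
    rewrite price1 pj.
    have : v S <= vAj by apply: vmon.
    lra.
  have sSA : S \subset A.
    apply/subsetP => kk kS; move/subsetP: sS => /(_ kk kS); rewrite !inE.
    by case/orP => // /eqP ekj; move: jS; rewrite -ekj kS.
  have : v S <= v A by apply: vmon.
  have : 0 <= price p S by apply: sumr_ge0.
  lra.
rewrite inE => /andP[iS iB].
pose p' kk := if (kk \in B) && (kk != i) then M + c else p kk.
have p'0 : forall kk, 0 <= p' kk.
  move=> kk; rewrite /p'; case: ifP => _ //; lra.
have pp' : forall kk, p kk <= p' kk.
  move=> kk; rewrite /p'; case: ifP => // /andP[kB _]; rewrite pB //; lra.
have [T [dT subT]] := gs p p' p0 p'0 pp' S dS.
have iT : i \in T.
  by move/subsetP: subT; apply; rewrite inE iS /p' eqxx andbF eqxx.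
have ij : i != j by apply/negP => /eqP eij; move: jB; rewrite -eij iB.
have p'i : p' i = c by rewrite /p' eqxx andbF pB.
have p'j : p' j = x by rewrite /p' (negbTE jB) pj.
have sT : T \subset A :|: [set j] :|: [set i].
  apply/subsetP => kk kT; rewrite !inE.
  case kA: (kk \in A) => //=; case kj: (kk == j) => //=.
  apply/negPn/negP => ki.
  suff : kk \notin T by rewrite kT.
  apply: (demand_avoid vval p'0 _ dT).
  rewrite /p'; case kB: (kk \in B) => /=; first by rewrite ki; have := vM setT; lra.
  by rewrite /p kA kj kB; exact: vM.
have pU : price p' (A :|: [set j]) = x.
  rewrite setUC /price big_setU1 //= big1 ?addr0 //.
  by move=> kk kA; rewrite /p' (disjointFr dAB kA) /p kA.
have hU := dT (A :|: [set j]); rewrite pU -/vAj in hU.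
case jT: (j \in T).
  exfalso.
  have : price p' [set j; i] <= price p' T.
    by apply: price_sub => //; apply/subsetP => kk; rewrite !inE => /orP[]/eqP->.
  rewrite price2 1?eq_sym // p'i p'j.
  have := Hm i iB; have := vmon _ _ sT.
  lra.
have sTA : T \subset A :|: [set i].
  apply/subsetP => kk kT; move/subsetP: sT => /(_ kk kT); rewrite !inE.
  by case/orP => [/orP[->//|/eqP ekj]|->]; [move: jT; rewrite -ekj kT|rewrite orbT].
have : price p' [set i] <= price p' T by apply: price_sub => //; rewrite sub1set.
rewrite price1 p'i.
have : v T <= v (A :|: [set i]) by apply: vmon.
move=> h1 h2; exists i => //.
have h : vAj - x < v (A :|: [set i]).
  apply: (le_lt_trans hU); apply: (le_lt_trans (lerB h1 h2)).
  by rewrite ltrBlDr ltrDl c0.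
move: h; clear; lra.
Qed.
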